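(* Let $(A,E,\alpha,\beta,\gamma)$ be an exact couple that converges conditionally to the colimit, and assume $RE^\infty_s=0$ for all $s$. Then the associated spectral sequence converges weakly to $A_\infty=\operatorname{colim}_sA_s$ with the filtration $F_sA_\infty=\operatorname{im}(\iota_s\colon A_s\to A_\infty)$, and this filtration is complete. Moreover $F_{-\infty}A_\infty\cong W$.
   Context: Work in the abelian category $\mathcal{A}$ of $\mathbb{Z}$-graded $R$-modules ($R$ a ring). An exact couple $(A,E,\alpha,\beta,\gamma)$ consists of objects $A_s,E_s$ ($s\in\mathbb{Z}$) and morphisms $\alpha_s\colon A_{s-1}\to A_s$, $\beta_s\colon A_s\to E_s$, $\gamma_s\colon E_s\to A_{s-1}$ such that $A_{s-1}\xrightarrow{\alpha}A_s\xrightarrow{\beta}E_s\xrightarrow{\gamma}A_{s-1}$ is exact at each vertex, for all $s$ (internal degree of $\alpha$ is $0$; those of $\beta,\gamma$ are $0,-1$ or $-1,0$). Its spectral sequence: $Z^r_s=\gamma^{-1}\operatorname{im}(\alpha^{r-1}\colon A_{s-r}\to A_{s-1})$, $B^r_s=\beta\ker(\alpha^{r-1}\colon A_s\to A_{s+r-1})$, $E^r_s=Z^r_s/B^r_s$, $d^r_s[x]=[\beta(y)]$ where $\gamma(x)=\alpha^{r-1}(y)$. Set $Z^\infty_s=\lim_rZ^r_s=\bigcap_rZ^r_s$, $B^\infty_s=\operatorname{colim}_rB^r_s=\bigcup_rB^r_s$, $E^\infty_s=Z^\infty_s/B^\infty_s$, $RE^\infty_s=\operatorname{Rlim}_rZ^r_s$,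 where $\operatorname{Rlim}=\lim^1$. $A_\infty=\operatorname{colim}_sA_s$ with structure maps $\iota_s$, $A_{-\infty}=\lim_sA_s$, $RA_{-\infty}=\operatorname{Rlim}_sA_s$. The exact couple converges conditionally to the colimit if $A_{-\infty}=0$ and $RA_{-\infty}=0$. A filtration of $G$ is a chain of subobjects $\cdots\subset F_{s-1}G\subset F_sG\subset\cdots\subset G$; $F_\infty G=\operatorname{colim}_sF_sG$, $F_{-\infty}G=\lim_sF_sG$, $RF_{-\infty}G=\operatorname{Rlim}_sF_sG$. It is exhaustive if $F_\infty G\to G$ is an isomorphism, Hausdorff if $F_{-\infty}G=0$, complete if $RF_{-\infty}G=0$. A spectral sequence converges weakly to filtered $G$ if the filtration is exhaustive and $E^\infty_s\cong F_sG/F_{s-1}G$ for all $s$. Boardman's whole-plane obstruction: $\operatorname{im}^rA_s=\operatorname{im}(\alpha^r\colon A_{s-r}\to A_s)$, $K_\infty\operatorname{im}^rA_s=\ker(\iota_s)\cap\operatorname{im}^rA_s$, $W=\operatorname{colim}_s\operatorname{Rlim}_rK_\infty\operatorname{im}^rA_s$. *)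

(* Defs.v *)
From HB Require Import structures.
From mathcomp Require Import all_boot all_order all_algebra.
Set Implicit Arguments.
Unset Strict Implicit.
Unset Printing Implicit Defensive.
Import GRing.Theory.
Local Open Scope ring_scope.

(* A s t is the degree-t part of A_s.
   calpha s t  = alpha_{s+1} : A_s -> A_{s+1}            (internal degree 0)
   cbeta s t   = beta_s      : A_s -> E_s                (internal degree 0)
   cgamma s t  = gamma_{s+1} : E_{s+1} -> A_s            (internal degree -1) *)
Record couple (R : pzRingType) := Couple {
  cA : int -> int -> lmodType R;
  cE : int -> int -> lmodType R;
  calpha : forall s t, {linear cA s t -> cA (s + 1) t};
  cbeta : forall s t, {linear cA s t -> cE s t};
  cgamma : forall s t, {linear cE (s + 1) t -> cA s (t - 1)} }.

Section Defs.
Variables (R : pzRingType) (C : couple R).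
Local Notation A := (cA C).
Local Notation E := (cE C).
Local Notation alpha := (calpha C).
Local Notation beta := (cbeta C).
Local Notation gamma := (cgamma C).

Definition is_exact : Prop :=
  forall s t : int,
    (forall x : A (s + 1) t, beta (s + 1) t x = 0 <-> exists y : A s t, alpha s t y = x) /\
    (forall e : E (s + 1) t, gamma s t e = 0 <-> exists y : A (s + 1) t, beta (s + 1) t y = e) /\
    (forall x : A s (t - 1), alpha s (t - 1) x = 0 <-> exists e : E (s + 1) t, gamma s t e = x).

Definition tot (t : int) := {s : int & A s t}.
Definition step (t : int) (x : tot t) : tot t :=
  Tagged (fun s => A s t) (alpha (tag x) t (tagged x)).
Definition alpha_it (n : nat) (s t : int) (a : A s t) : tot t :=
  iter n (@step t) (Tagged (fun s => A s t) a).
Definition im_it (n : nat) (s t : int) (b : A s t) : Prop :=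
  exists c : A (s - n%:Z) t, alpha_it n c = Tagged (fun s => A s t) b.
Definition ker_it (n : nat) (s t : int) (a : A s t) : Prop :=
  tagged (alpha_it n a) = 0 :> A (tag (alpha_it n a)) t.

(* Z^{n+1}_{s+1} = gamma^{-1} im(alpha^n : A_{s-n} -> A_s), as a predicate on E_{s+1} *)
Definition Zr (n : nat) (s t : int) (e : E (s + 1) t) : Prop := im_it n (gamma s t e).
Definition Zinf (s t : int) (e : E (s + 1) t) : Prop := forall n, Zr n e.
(* B^infty_{s+1} = union_n beta ker(alpha^n : A_{s+1} -> A_{s+1+n}) *)
Definition Binf (s t : int) (e : E (s + 1) t) : Prop :=
  exists (n : nat) (y : A (s + 1) t), ker_it n y /\ beta (s + 1) t y = e.
(* RE^infty_{s+1} = Rlim_r Z^r_{s+1} = 0 *)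
Definition RE_vanish (s t : int) : Prop :=
  forall z : nat -> E (s + 1) t, (forall n, Zr n (z n)) ->
  exists y : nat -> E (s + 1) t, (forall n, Zr n (y n)) /\ forall n, z n = y n - y n.+1.

(* A_{-infty} = lim_s A_s = 0  and  RA_{-infty} = Rlim_s A_s = 0 *)
Definition lim_A_vanish : Prop :=
  forall (t : int) (a : forall s, A s t), (forall s, alpha s t (a s) = a (s + 1)) ->
  forall s, a s = 0.
Definition Rlim_A_vanish : Prop :=
  forall (t : int) (z : forall s, A s t),
  exists y : forall s, A s t, forall s, z (s + 1) = y (s + 1) - alpha s t (y s).
Definition conv_cond : Prop := lim_A_vanish /\ Rlim_A_vanish.

Variables (G : int -> lmodType R) (iota : forall s t, {linear A s t -> G t}).

Definition is_colim : Prop :=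
  (forall s t (a : A s t), iota (s + 1) t (alpha s t a) = iota s t a) /\
  (forall t (g : G t), exists s (a : A s t), iota s t a = g) /\
  (forall s t (a : A s t), iota s t a = 0 <-> exists n, ker_it n a).

Definition Filt (s t : int) (g : G t) : Prop := exists a : A s t, iota s t a = g.

(* an isomorphism of subquotients  Z/B ~= F/F'  (Z,B submodules of M, F' <= F submodules of N),
   given by a map Z -> F which is R-linear modulo F', surjective modulo F', with
   preimage of F' equal to B *)
Definition sq_iso (M N : lmodType R) (Z B : M -> Prop) (F F' : N -> Prop) : Prop :=
  exists phi : M -> N,
    [/\ forall x, Z x -> F (phi x),
        forall x y, Z x -> Z y -> F' (phi (x + y) - (phi x + phi y)),
        forall (a : R) x, Z x -> F' (phi (a *: x) - a *: phi x),
        forall x, Z x -> (F' (phi x) <-> B x) &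
        forall y, F y -> exists x, Z x /\ F' (y - phi x)].

(* weak convergence to G with filtration F: exhaustive, and E^infty_s ~= F_s/F_{s-1} *)
Definition weak_conv : Prop :=
  (forall t (g : G t), exists s, Filt s g) /\
  (forall s t, sq_iso (@Zinf s t) (@Binf s t) (@Filt (s + 1) t) (@Filt s t)).

(* completeness: Rlim_s F_s G = 0 *)
Definition filt_complete : Prop :=
  forall t (z : int -> G t), (forall s, Filt s (z s)) ->
  exists y : int -> G t, (forall s, Filt s (y s)) /\ forall s, z (s + 1) = y (s + 1) - y s.

Definition Finf (t : int) (g : G t) : Prop := forall s, Filt s g.

(* elements of prod_r K_infty im^r A_s, with K_infty im^r A_s = ker iota_s /\ im^r A_s *)
Definition Krep (s t : int) (x : nat -> A s t) : Prop :=
  forall r, iota s t (x r) = 0 /\ im_it r (x r).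
(* the image of 1 - shift, whose cokernel is Rlim_r K_infty im^r A_s *)
Definition Dsub (s t : int) (x : nat -> A s t) : Prop :=
  exists y, Krep y /\ forall r, x r = y r - y r.+1.
(* the class of x vanishes after applying alpha^n (transition maps of colim_s) *)
Fixpoint evD (n : nat) (s t : int) (x : nat -> A s t) : Prop :=
  match n with
  | 0 => Dsub x
  | n'.+1 => evD n' (fun r => alpha s t (x r))
  end.

(* F_{-infty} G ~= W = colim_s Rlim_r K_infty im^r A_s  (in degree t):
   an R-linear map W -> G given on representatives, compatible with the colimit
   transition maps, with image F_{-infty} G and trivial kernel *)
Definition Finf_iso_W (t : int) : Prop :=
  exists psi : forall s, (nat -> A s t) -> G t,
    [/\ forall s x, Krep x -> Finf (psi s x),
        (forall s x y, Krep x -> Krep y -> psi s (fun r => x r + y r) = psi s x + psi s y) /\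
        (forall s (a : R) x, Krep x -> psi s (fun r => a *: x r) = a *: psi s x),
        forall s x, Krep x -> psi (s + 1) (fun r => alpha s t (x r)) = psi s x,
        forall s x, Krep x -> (psi s x = 0 <-> exists n, evD n x) &
        forall g, Finf g -> exists s x, Krep x /\ psi s x = g].

End Defs.

(* Main.v *)
Require Import Defs.
From HB Require Import structures.
From mathcomp Require Import all_boot all_order all_algebra.
From mathcomp Require Import zify.
From Stdlib Require Import ClassicalEpsilon.
Set Implicit Arguments.
Unset Strict Implicit.
Unset Printing Implicit Defensive.
Import GRing.Theory.
Local Open Scope ring_scope.

Lemma int_shift (P : int -> Prop) : (forall i, P (i + 1)) -> forall j, P j.
Proof. by move=> H j; rewrite -(subrK 1 j); apply: H. Qed.

Section Basic.
Variables (R : pzRingType) (C : couple R).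
Local Notation A := (cA C).
Local Notation alpha := (calpha C).

Definition get (t k : int) (x : tot C t) : A k t :=
  match tag x =P k with
  | ReflectT e => eq_rect (tag x) (fun s => A s t) (tagged x) k e
  | ReflectF _ => 0
  end.

Lemma get_Tagged t k (a : A k t) : get k (Tagged (fun s => A s t) a) = a.
Proof.
rewrite /get /=; case: eqP => // e; by rewrite (eq_axiomK e).
Qed.

Lemma get_neq t k (x : tot C t) : tag x <> k -> get k x = 0.
Proof. by rewrite /get; case: eqP. Qed.

Lemma Tagged_get t k (x : tot C t) : tag x = k -> Tagged (fun s => A s t) (get k x) = x.
Proof. by case: x => s a /= e; subst k; rewrite get_Tagged. Qed.

Lemma Tagged_eq t (f : forall m, A m t) m m' : m = m' ->
  Tagged (fun s => A s t) (f m) = Tagged (fun s => A s t) (f m').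
Proof. by move=> ->. Qed.

Lemma get_step t j (x : tot C t) : get (j + 1) (step x) = alpha j t (get j x).
Proof.
case: x => s a; rewrite /step /=.
case: (s =P j) => [e|ne].
  by subst j; rewrite !get_Tagged.
rewrite !get_neq //= ?linear0 //.
by move=> /addIr.
Qed.

Lemma tag_iter t n (x : tot C t) : tag (iter n (@step _ C t) x) = tag x + n%:Z.
Proof.
elim: n => [|n IH] /=; first by rewrite addr0.
by rewrite IH -addrA -PoszD addn1.
Qed.

Lemma get_it_lin t r m (k : R) (a b : A m t) j :
  get j (iter r (@step _ C t) (Tagged (fun s => A s t) (k *: a + b))) =
  k *: get j (iter r (@step _ C t) (Tagged (fun s => A s t) a))
   + get j (iter r (@step _ C t) (Tagged (fun s => A s t) b)).
Proof.
elim: r j => [|r IH] j /=.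
  case: (m =P j) => [e|ne]; first by subst j; rewrite !get_Tagged.
  by rewrite !get_neq // scaler0 addr0.
move: j; apply: int_shift => i.
by rewrite !get_step IH linearP.
Qed.

Lemma get_it_add t r m (a b : A m t) j :
  get j (iter r (@step _ C t) (Tagged (fun s => A s t) (a + b))) =
  get j (iter r (@step _ C t) (Tagged (fun s => A s t) a))
   + get j (iter r (@step _ C t) (Tagged (fun s => A s t) b)).
Proof. by have := get_it_lin r 1 a b j; rewrite !scale1r. Qed.

Lemma get_it0 t r m j :
  get j (iter r (@step _ C t) (Tagged (fun s => A s t) (0 : A m t))) = 0.
Proof.
have := get_it_lin r 1 (0 : A m t) 0 j.
rewrite !scale1r addr0 => e.
by apply: (addIr (get j (iter r (@step _ C t) (Tagged (fun s => A s t) (0 : A m t))))); rewrite add0r -{1}e.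
Qed.

Lemma get_it_scale t r m (k : R) (a : A m t) j :
  get j (iter r (@step _ C t) (Tagged (fun s => A s t) (k *: a))) =
  k *: get j (iter r (@step _ C t) (Tagged (fun s => A s t) a)).
Proof. by have := get_it_lin r k a 0 j; rewrite get_it0 !addr0. Qed.

Lemma get_it_sub t r m (a b : A m t) j :
  get j (iter r (@step _ C t) (Tagged (fun s => A s t) (a - b))) =
  get j (iter r (@step _ C t) (Tagged (fun s => A s t) a))
   - get j (iter r (@step _ C t) (Tagged (fun s => A s t) b)).
Proof. by rewrite get_it_add -scaleN1r get_it_scale scaleN1r. Qed.

Definition Iim t (n : nat) (x : tot C t) := exists c, iter n (@step _ C t) c = x.

Lemma im_itP t n s (b : A s t) : im_it n b <-> Iim n (Tagged (fun s => A s t) b).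
Proof.
split=> [[c e]|[c e]]; first by exists (Tagged (fun s => A s t) c).
have tc : tag c = s - n%:Z.
  have := congr1 tag e; rewrite tag_iter /= => <-; by rewrite addrK.
exists (get (s - n%:Z) c); rewrite /alpha_it Tagged_get //.
Qed.

End Basic.

Lemma dchoice (X : Type) (Y : X -> Type) (P : forall x, Y x -> Prop) :
  (forall x, exists y, P x y) -> exists f : forall x, Y x, forall x, P x (f x).
Proof.
move=> H; exists (fun x => proj1_sig (constructive_indefinite_description _ (H x))).
by move=> x; case: (constructive_indefinite_description _ (H x)).
Qed.

Lemma zmod_aux (V : zmodType) (D0 D1 G0 G1 : V) : G0 - G1 = D0 - D1 -> D1 - G1 = D0 - G0.
Proof.
move=> h; have -> : D1 = D0 - (G0 - G1) by rewrite h opprB addrC subrK.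
by rewrite opprB addrCA addrC addrK.
Qed.

Section Main.
Variables (R : pzRingType) (C : couple R).
Local Notation A := (cA C).
Local Notation alpha := (calpha C).
Local Notation beta := (cbeta C).
Local Notation gamma := (cgamma C).
Local Notation stp t := (@step _ C t).
Local Notation Tg t := (Tagged (fun s => A s t)).
Hypothesis hex : is_exact C.
Hypothesis hcc : conv_cond C.
Hypothesis hRE : forall s t, RE_vanish C s t.

Lemma alpha_gamma s t e : alpha s (t - 1) (gamma s t e) = 0.
Proof. by apply/((hex s t).2.2 _).2; exists e. Qed.
Lemma beta_alpha s t y : beta (s + 1) t (alpha s t y) = 0.
Proof. by apply/((hex s t).1 _).2; exists y. Qed.
Lemma gamma_beta s t y : gamma s t (beta (s + 1) t y) = 0.
Proof. by apply/((hex s t).2.1 _).2; exists y. Qed.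

Lemma Iim_step t n (x : tot C t) : Iim n x -> Iim n (stp t x).
Proof. by case=> c <-; exists (stp t c); rewrite -iterS iterSr. Qed.

Lemma Iim_S t n (x : tot C t) : Iim n.+1 x -> Iim n x.
Proof. by case=> c <-; exists (stp t c); rewrite iterSr. Qed.

Lemma Iim_le t n m (x : tot C t) : (n <= m)%N -> Iim m x -> Iim n x.
Proof.
move=> /subnK <-; elim: (m - n)%N => [|d IH] //= H.
by apply: IH; apply: Iim_S; rewrite -addSn.
Qed.

Lemma Iim_tag t n (x c : tot C t) : iter n (stp t) c = x -> tag c = tag x - n%:Z.
Proof. by move=> <-; rewrite tag_iter addrK. Qed.

Lemma Iim_lin t r s (k : R) (a b : A s t) :
  Iim r (Tg t a) -> Iim r (Tg t b) -> Iim r (Tg t (k *: a + b)).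
Proof.
move=> [ca ea] [cb eb].
have ta := Iim_tag ea; have tb := Iim_tag eb.
rewrite /= in ta tb.
rewrite -(Tagged_get ta) in ea; rewrite -(Tagged_get tb) in eb.
exists (Tg t (k *: get (s - r%:Z) ca + get (s - r%:Z) cb)).
apply: etrans; first by apply: esym; apply: (@Tagged_get _ _ _ s); rewrite tag_iter /= subrK.
by rewrite get_it_lin ea eb !get_Tagged.
Qed.

Lemma Iim0 t r s : Iim r (Tg t (0 : A s t)).
Proof.
exists (Tg t (0 : A (s - r%:Z) t)).
apply: etrans; first by apply: esym; apply: (@Tagged_get _ _ _ s); rewrite tag_iter /= subrK.
by rewrite get_it0.
Qed.

Lemma Iim_add t r s (a b : A s t) :
  Iim r (Tg t a) -> Iim r (Tg t b) -> Iim r (Tg t (a + b)).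
Proof. by move=> ha hb; have := Iim_lin 1 ha hb; rewrite scale1r. Qed.
Lemma Iim_scale t r s k (a : A s t) : Iim r (Tg t a) -> Iim r (Tg t (k *: a)).
Proof. by move=> ha; have := Iim_lin k ha (Iim0 t r s); rewrite addr0. Qed.
Lemma Iim_sub t r s (a b : A s t) :
  Iim r (Tg t a) -> Iim r (Tg t b) -> Iim r (Tg t (a - b)).
Proof. by move=> ha hb; apply: Iim_add => //; rewrite -scaleN1r; apply: Iim_scale. Qed.

Lemma F0step t (x : tot C (t - 1)) : (forall n, Iim n x) ->
  exists x', (forall n, Iim n x') /\ stp (t - 1) x' = x.
Proof.
move=> Hx; set k := tag x - 1.
have [d Hd] : exists d : nat -> tot C (t - 1), forall r, Iim r (d r) /\ stp _ (d r) = x.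
  apply: (@dchoice nat (fun _ => tot C (t - 1)) (fun r (d : tot C (t - 1)) => Iim r d /\ stp _ d = x)) => r.
  case: (Hx r.+1) => c ec; exists (iter r (stp _) c); split; first by exists c.
  by rewrite -iterS.
have td : forall r, tag (d r) = k.
  by move=> r; rewrite /k -(Hd r).2 /= addrK.
have dk : forall r, Tg _ (get k (d r)) = d r by move=> r; rewrite Tagged_get.
have ax : forall r, alpha k (t - 1) (get k (d r)) = get (k + 1) x.
  by move=> r; rewrite -get_step (Hd r).2.
have [e He] : exists e : nat -> cE C (k + 1) t, forall r,
    gamma k t (e r) = get k (d r) - get k (d r.+1).
  apply: (@dchoice nat (fun _ => cE C (k + 1) t) (fun r (e : cE C (k + 1) t) => gamma k t e = get k (d r) - get k (d r.+1))) => r.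
  by apply/((hex k t).2.2 _).1; rewrite linearB /= !ax subrr.
have Ze : forall r, Zr r (e r).
  move=> r; rewrite /Zr He im_itP; apply: Iim_sub; rewrite dk; first exact: (Hd r).1.
  by apply: Iim_S; exact: (Hd r.+1).1.
have [y [Zy ey]] := hRE Ze.
pose b r := get k (d r) - gamma k t (y r).
have bS : forall r, b r.+1 = b r.
  move=> r; have h := He r; rewrite ey linearB in h; rewrite /b.
  exact: zmod_aux h.
have b0 : forall r, b r = b 0%N by elim=> // r IH; rewrite bS.
exists (Tg _ (b 0%N)); split.
  move=> n; rewrite -(b0 n) /b; apply: Iim_sub; first by rewrite dk; exact: (Hd n).1.
  by rewrite -im_itP; exact: (Zy n).
rewrite /step /= /b linearB /= alpha_gamma subr0 ax.
by rewrite Tagged_get // /k subrK.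
Qed.


Lemma F0core t (x0 : tot C (t - 1)) : (forall n, Iim n x0) -> get (tag x0) x0 = 0.
Proof.
move=> H0; set s0 := tag x0.
have [f Hf] : exists f : tot C (t - 1) -> tot C (t - 1), forall x,
    (forall n, Iim n x) -> (forall n, Iim n (f x)) /\ stp _ (f x) = x.
  apply: (@dchoice _ (fun _ => tot C (t - 1))
     (fun x y => (forall n, Iim n x) -> (forall n, Iim n y) /\ stp _ y = x)) => x.
  case: (classic (forall n, Iim n x)) => hx; last by exists x.
  by have [x' [h1 h2]] := F0step hx; exists x'.
pose v n := iter n f x0.
have hv1 : forall n m, Iim m (v n).
  elim=> [|n IH] //= m; exact: ((Hf _ IH).1 m).
have hv2 : forall n, stp _ (v n.+1) = v n by move=> n; exact: (Hf _ (hv1 n)).2.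
pose V n m := iter m (stp _) (v n).
have VS : forall n m, V n.+1 m.+1 = V n m by move=> n m; rewrite /V iterSr hv2.
have Vd : forall d n m, V (n + d)%N (m + d)%N = V n m.
  by elim=> [|d IH] n m; rewrite ?addn0 // !addnS VS IH.
have Veq : forall n m n' m', (m%:Z - n%:Z = m'%:Z - n'%:Z) -> V n m = V n' m'.
  move=> n m n' m' e; case: (leqP n n') => hn.
    have -> : n' = (n + (n' - n))%N by lia.
    have -> : m' = (m + (n' - n))%N by lia.
    by rewrite Vd.
  have -> : n = (n' + (n - n'))%N by lia.
  have -> : m = (m' + (n - n'))%N by lia.
  by rewrite Vd.
have tv : forall n, tag (v n) = s0 - n%:Z.
  elim=> [|n IH]; first by rewrite subr0.
  have := congr1 tag (hv2 n); rewrite /= IH => h; lia.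
have tV : forall n m, tag (V n m) = s0 - n%:Z + m%:Z by move=> n m; rewrite tag_iter tv.
pose N k := absz (k - s0).
pose M k := absz (k - s0 + (N k)%:Z).
have NM : forall k, (M k)%:Z - (N k)%:Z = k - s0 by move=> k; rewrite /M /N; lia.
pose a k := get k (V (N k) (M k)).
have compat : forall k, alpha k (t - 1) (a k) = a (k + 1).
  move=> k; rewrite /a -get_step -iterS.
  have e := Veq (N k) (M k).+1 (N (k + 1)) (M (k + 1)).
  rewrite /V in e; rewrite e //.
  have := NM k; have := NM (k + 1); lia.
have := hcc.1 (t - 1) a compat s0.
rewrite /a (Veq (N s0) (M s0) 0%N 0%N) //; by rewrite NM subrr.
Qed.

Lemma F0 u s (b : A s u) : (forall n, im_it n b) -> b = 0.
Proof.
move: s b; rewrite -(addrK 1 u) => s b hb.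
have := @F0core (u + 1) (Tg _ b); rewrite get_Tagged; apply.
by move=> n; rewrite -im_itP.
Qed.

Lemma im_lin u s r k (a b : A s u) : im_it r a -> im_it r b -> im_it r (k *: a + b).
Proof. by rewrite !im_itP; apply: Iim_lin. Qed.
Lemma im_0 u s r : im_it r (0 : A s u).
Proof. by rewrite im_itP; apply: Iim0. Qed.
Lemma im_add u s r (a b : A s u) : im_it r a -> im_it r b -> im_it r (a + b).
Proof. by rewrite !im_itP; apply: Iim_add. Qed.
Lemma im_sub u s r (a b : A s u) : im_it r a -> im_it r b -> im_it r (a - b).
Proof. by rewrite !im_itP; apply: Iim_sub. Qed.
Lemma im_scale u s r k (a : A s u) : im_it r a -> im_it r (k *: a).
Proof. by rewrite !im_itP; apply: Iim_scale. Qed.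
Lemma im_S u s r (a : A s u) : im_it r.+1 a -> im_it r a.
Proof. by rewrite !im_itP; apply: Iim_S. Qed.
Lemma im_alpha u s r (a : A s u) : im_it r a -> im_it r (alpha s u a).
Proof. by rewrite !im_itP; apply: (@Iim_step u r (Tg u a)). Qed.

Definition CR u s (x c : nat -> A s u) :=
  (forall r, im_it r (c r)) /\ (forall r, x r = c r - c r.+1).

Lemma CR_uniq u s (x c c' : nat -> A s u) : CR x c -> CR x c' -> forall r, c r = c' r.
Proof.
move=> [hc ec] [hc' ec'].
pose d r := c r - c' r.
have dS : forall r, d r.+1 = d r.
  move=> r; rewrite /d; apply: zmod_aux.
  by rewrite -ec -ec'.
have d0 : forall r, d r = d 0%N by elim=> // r IH; rewrite dS.
move=> r; apply/eqP; rewrite -subr_eq0; apply/eqP.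
apply: (@F0 u s); move=> n; rewrite -/(d r) d0 -(d0 n).
exact: im_sub.
Qed.

Lemma CR_ex u s (x : nat -> A s u) : (forall r, im_it r (x r)) -> exists c, CR x c.
Proof.
move=> hx.
have [w Hw] : exists w : nat -> tot C u, forall r, iter r (stp u) (w r) = Tg u (x r).
  apply: (@dchoice nat (fun _ => tot C u) (fun r (w : tot C u) => iter r (stp u) w = Tg u (x r))) => r.
  by have := hx r; rewrite im_itP.
have tw : forall r, tag (w r) = s - r%:Z by move=> r; rewrite (Iim_tag (Hw r)).
pose z k := if (k <= s)%R then get k (w (absz (s - k))) else 0.
have [y Hy] := hcc.2 u z.
pose c r := get s (iter r (stp u) (Tg u (y (s - r%:Z)))).
exists c; split.
  move=> r; rewrite im_itP; exists (Tg u (y (s - r%:Z))).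
  by rewrite Tagged_get // tag_iter /= subrK.
move=> r.
have e1 : stp u (Tg u (y (s - r.+1%:Z))) = Tg u (y (s - r%:Z) - z (s - r%:Z)).
  rewrite /step /=.
  have -> : alpha (s - r.+1%:Z) u (y (s - r.+1%:Z)) =
     y (s - r.+1%:Z + 1) - z (s - r.+1%:Z + 1).
    by rewrite Hy subKr.
  apply: (@Tagged_eq _ _ u (fun m => y m - z m)); lia.
have e2 : z (s - r%:Z) = get (s - r%:Z) (w r).
  rewrite /z ifT; last by lia.
  by have -> : absz ((s - (s - r%:Z))%R) = r by lia.
rewrite /c iterSr e1 get_it_sub e2 Tagged_get // Hw get_Tagged.
by rewrite subKr.
Qed.

Section Colim.
Variables (G : int -> lmodType R) (iota : forall s t, {linear A s t -> G t}).
Hypothesis hcol : is_colim iota.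

Definition iot t (x : tot C t) := iota (tag x) t (tagged x).

Lemma iot_step t (x : tot C t) : iot (stp t x) = iot x.
Proof. by rewrite /iot /step /= hcol.1. Qed.

Lemma iot_iter t n (x : tot C t) : iot (iter n (stp t) x) = iot x.
Proof. by elim: n => //= n IH; rewrite iot_step IH. Qed.

Lemma Filt_tot t k (g : G t) : Filt iota k g <-> exists x : tot C t, tag x = k /\ iot x = g.
Proof.
split=> [[a ea]|[x [tx ex]]]; first by exists (Tg t a).
exists (get k x); rewrite -ex -{2}(Tagged_get tx) //.
Qed.

Lemma Filt_le t k j (g : G t) : Filt iota k g -> (k <= j)%R -> Filt iota j g.
Proof.
rewrite !Filt_tot => -[x [tx ex]] kj.
exists (iter (absz (j - k)) (stp t) x); split; last by rewrite iot_iter.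
rewrite tag_iter tx; lia.
Qed.

Lemma kerbeta_F s t (a : A (s + 1) t) : beta (s + 1) t a = 0 -> Filt iota s (iota (s + 1) t a).
Proof. by move=> /((hex s t).1 _).1 [c <-]; exists c; rewrite hcol.1. Qed.


Lemma iota_ker s t (a : A s t) n : ker_it n a -> iota s t a = 0.
Proof. by move=> h; apply/(hcol.2.2 s t a).2; exists n. Qed.

Lemma weak_conv_ok : weak_conv iota.
Proof.
split.
  move=> t g; have [s [a ea]] := hcol.2.1 t g; by exists s, a.
move=> s t.
pose P (e : cE C (s + 1) t) :=
  epsilon (inhabits (0 : A (s + 1) t)) (fun a => beta (s + 1) t a = e).
have PZ : forall e, Zinf e -> beta (s + 1) t (P e) = e.
  move=> e he; apply: (epsilon_spec (inhabits (0 : A (s + 1) t)) (fun a => beta (s + 1) t a = e)).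
  apply/((hex s t).2.1 e).1.
  by apply: (@F0 (t - 1) s); exact: he.
exists (fun e => iota (s + 1) t (P e)); split.
- by move=> x _; exists (P x).
- move=> x y hx hy; rewrite -!linearD -linearB; apply: kerbeta_F.
  have hxy : Zinf (x + y) by move=> n; rewrite /Zr linearD; apply: im_add; [exact: hx | exact: hy].
  by rewrite !linearB !linearD /= (PZ _ hxy) (PZ _ hx) (PZ _ hy) -opprD subrr.
- move=> k x hx; rewrite -linearZ -linearB; apply: kerbeta_F.
  have hkx : Zinf (k *: x) by move=> n; rewrite /Zr linearZ; apply: im_scale; exact: hx.
  by rewrite linearB linearZ /= (PZ _ hkx) (PZ _ hx) subrr.
- move=> x hx; split.
    move=> [c ec].
    have : iota (s + 1) t (P x - alpha s t c) = 0 by rewrite linearB hcol.1 ec subrr.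
    move=> /(hcol.2.2 _ _ _).1 [n hn].
    exists n, (P x - alpha s t c); split => //.
    by rewrite linearB beta_alpha subr0 PZ.
  move=> [n [y [hy ey]]].
  have : beta (s + 1) t (P x - y) = 0 by rewrite linearB PZ // ey subrr.
  move=> /((hex s t).1 _).1 [c ec]; exists c.
  by rewrite -hcol.1 ec linearB (iota_ker hy) subr0.
- move=> g [a ea]; exists (beta (s + 1) t a).
  have hz : Zinf (beta (s + 1) t a).
    by move=> n; rewrite /Zr gamma_beta; apply: im_0.
  split => //; rewrite -ea -linearB; apply: kerbeta_F.
  by rewrite linearB PZ // subrr.
Qed.

Lemma filt_complete_ok : filt_complete iota.
Proof.
move=> t z hz.
have [a ha] : exists a : forall s, A s t, forall s, iota s t (a s) = z s.
  apply: (@dchoice int (fun s => A s t) (fun s a => iota s t a = z s)) => s.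
  by have [a ea] := hz s; exists a.
have [y hy] := hcc.2 t a.
exists (fun s => iota s t (y s)); split; first by move=> s; exists (y s).
by move=> s; rewrite -ha hy linearB hcol.1.
Qed.


Definition cpick t s (x : nat -> A s t) : nat -> A s t :=
  epsilon (inhabits (fun _ => 0 : A s t)) (CR x).
Definition psi t s (x : nat -> A s t) := iota s t (cpick x 0%N).

Lemma psiE t s (x c : nat -> A s t) : CR x c -> psi x = iota s t (c 0%N).
Proof.
move=> h; rewrite /psi (@CR_uniq t s x (cpick x) c) //.
by apply: epsilon_spec; exists c.
Qed.

Lemma Krep_im t s (x : nat -> A s t) : Krep iota x -> forall r, im_it r (x r).
Proof. by move=> h r; exact: (h r).2. Qed.

Lemma CR_iota t s (x c : nat -> A s t) : Krep iota x -> CR x c ->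
  forall r, iota s t (c r) = iota s t (c 0%N).
Proof.
move=> hk [_ ec]; elim=> // r IH.
have -> : c r.+1 = c r - x r by rewrite ec subKr.
by rewrite -IH linearB (hk r).1 subr0.
Qed.

Lemma CR_alpha t s (x c : nat -> A s t) : CR x c ->
  CR (fun r => alpha s t (x r)) (fun r => alpha s t (c r)).
Proof.
move=> [hc ec]; split; first by move=> r; apply: im_alpha.
by move=> r; rewrite ec linearB.
Qed.

Lemma Krep_alpha t s (x : nat -> A s t) : Krep iota x -> Krep iota (fun r => alpha s t (x r)).
Proof.
move=> h r; split; first by rewrite hcol.1 (h r).1.
by apply: im_alpha; exact: (h r).2.
Qed.

Lemma psi_alpha t s (x : nat -> A s t) : Krep iota x ->
  psi (fun r => alpha s t (x r)) = psi x.
Proof.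
move=> hk; have [c hc] := CR_ex (Krep_im hk).
by rewrite (psiE (CR_alpha hc)) (psiE hc) hcol.1.
Qed.

Lemma Finf_iso_W_ok t : Finf_iso_W iota t.
Proof.
exists (@psi t); split.
- move=> s x hk; have [c hc] := CR_ex (Krep_im hk).
  rewrite (psiE hc) => k.
  case hks : (k <= s)%R; last by apply: (@Filt_le t s); [exists (c 0%N) | lia].
  have hcr := hc.1 (absz (s - k)).
  rewrite im_itP in hcr; case: hcr => w ew.
  apply/Filt_tot; exists w; split.
    by rewrite (Iim_tag ew) /=; lia.
  rewrite -(iot_iter (absz (s - k)) w) ew /iot /=.
  exact: (CR_iota hk hc).
- split.
    move=> s x y hx hy.
    have [c hc] := CR_ex (Krep_im hx); have [d hd] := CR_ex (Krep_im hy).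
    have hcd : CR (fun r => x r + y r) (fun r => c r + d r).
      split; first by move=> r; apply: im_add; [exact: hc.1 | exact: hd.1].
      by move=> r; rewrite hc.2 hd.2 opprD addrACA.
    by rewrite (psiE hcd) (psiE hc) (psiE hd) linearD.
  move=> s k x hx; have [c hc] := CR_ex (Krep_im hx).
  have hkc : CR (fun r => k *: x r) (fun r => k *: c r).
    split; first by move=> r; apply: im_scale; exact: hc.1.
    by move=> r; rewrite hc.2 scalerBr.
  by rewrite (psiE hkc) (psiE hc) linearZ.
- by move=> s x hk; apply: psi_alpha.
- move=> s x hk; split.
    have [c hc] := CR_ex (Krep_im hk); rewrite (psiE hc) => h0.
    exists 0%N; exists c; split; last exact: hc.2.
    by move=> r; split; [rewrite (CR_iota hk hc) | exact: hc.1].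
  move=> [n]; elim: n s x hk => [|n IH] s x hk /=.
    move=> [y [hy ey]]; rewrite (psiE (conj (fun r => (hy r).2) ey)).
    exact: (hy 0%N).1.
  by move=> h; rewrite -psi_alpha //; apply: IH => //; apply: Krep_alpha.
- move=> g hg; exists 0.
  have [w hw] : exists w : forall r : nat, A (0 - r%:Z) t, forall r, iota _ t (w r) = g.
    apply: (@dchoice nat (fun r => A (0 - r%:Z) t) (fun r a => iota _ t a = g)) => r.
    by have [a ea] := hg (0 - r%:Z); exists a.
  pose c r := get 0 (iter r (stp t) (Tg t (w r))).
  have tc : forall r, Tg t (c r) = iter r (stp t) (Tg t (w r)).
    by move=> r; rewrite Tagged_get // tag_iter /= subrK.
  have ic : forall r, im_it r (c r) by move=> r; rewrite im_itP tc; exists (Tg t (w r)).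
  have gc : forall r, iota 0 t (c r) = g.
    move=> r; rewrite -[iota 0 t (c r)]/(iot (Tg t (c r))) tc iot_iter.
    exact: hw.
  exists (fun r => c r - c r.+1); split.
    move=> r; split; first by rewrite linearB !gc subrr.
    by apply: im_sub; [exact: ic | apply: im_S; exact: ic].
  by rewrite (psiE (conj ic (fun r => erefl))) gc.
Qed.
End Colim.
End Main.

Theorem theorem3p8 (R : pzRingType) (C : couple R)
  (G : int -> lmodType R) (iota : forall s t, {linear cA C s t -> G t}) :
  is_exact C -> conv_cond C -> is_colim iota ->
  (forall s t, RE_vanish C s t) ->
  weak_conv iota /\ filt_complete iota /\ (forall t, Finf_iso_W iota t).
Proof.
move=> hex hcc hcol hRE; split; first exact: weak_conv_ok.
split; first exact: filt_complete_ok.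
by move=> t; apply: Finf_iso_W_ok.
Qed.
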